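(* Let $G$ be a finite abelian group and $H$ a proper subgroup of $G$. Let $\mathcal P=P_0\mid P_1\mid\cdots\mid P_M$ be a partition of $H$, and let its dual partition (a partition of $\widehat H$) be $\widehat{\mathcal P}=Q_0\mid Q_1\mid\cdots\mid Q_L$, indexed so that $Q_0=\{\varepsilon_H\}$. Let $K_{\ell,m}$ ($\ell\in\{0,\dots,L\}$, $m\in\{0,\dots,M\}$) be the Krawtchouk coefficients of $(\mathcal P,\widehat{\mathcal P})$. Put $P_{-1}:=G\setminus H$ and $\mathcal P'=P_{-1}\mid P_0\mid\cdots\mid P_M$, a partition of $G$. Then the dual partition of $\mathcal P'$ is $\widehat{\mathcal P'}=Q'_{-1}\mid Q'_0\mid Q'_1\mid\cdots\mid Q'_L$, where $Q'_{-1}=H^{\perp}\setminus\{\varepsilon_G\}$, $Q'_0=\{\varepsilon_G\}$ and $Q'_\ell=\{\chi\in\widehat G\setminus H^\perp : \chi|_H\in Q_\ell\}$ for $\ell=1,\dots,L$ (all empty sets being discarded). The Krawtchouk coefficients $K'_{\ell,m}$ ($\ell\in\{-1,\dots,L\}$, $m\in\{-1,\dots,M\}$) of $(\mathcal P',\widehat{\mathcal P'})$ are: $K'_{-1,-1}=-|H|$, $K'_{-1,m}=|P_m|$ for $m\ge 0$; $K'_{0,-1}=|P_{-1}|$, $K'_{0,m}=K_{0,m}$ for $m\ge0$; and for $\ell\ge1$: $K'_{\ell,-1}=0$, $K'_{\ell,m}=K_{\ell,m}$ for $m\ge0$. Consequently, if $\mathcal P$ is reflexive, then so is $\mathcal 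P'$.
   Context: For a finite abelian group $G$, $\widehat G=\mathrm{Hom}(G,\mathbb C^* )$ is its character group, with zero element the principal character $\varepsilon_G\equiv1$; $\chi|_H$ denotes restriction, and $H^\perp=\{\chi\in\widehat G:\chi(h)=1\ \forall h\in H\}$. For a partition $\mathcal P=P_1\mid\cdots\mid P_M$ of $G$, its dual partition $\widehat{\mathcal P}$ is the partition of $\widehat G$ given by $\chi\sim\chi'$ iff $\sum_{g\in P_m}\chi(g)=\sum_{g\in P_m}\chi'(g)$ for all $m$. (The singleton $\{\varepsilon\}$ is always a block of a dual partition.) If $\widehat{\mathcal P}=Q_1\mid\cdots\mid Q_L$, the Krawtchouk coefficients of $(\mathcal P,\widehat{\mathcal P})$ are $K_{\ell,m}=\sum_{g\in P_m}\chi(g)$ for any $\chi\in Q_\ell$ (independent of the choice of $\chi$). $\mathcal P$ is reflexive if its bidual (a partition of $\widehat{\widehat G}\cong G$ via the canonical isomorphism) equals $\mathcal P$; equivalently, $\mathcal P$ and $\widehat{\mathcal P}$ have the same number of blocks. *)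

(* Defs.v *)
From HB Require Import structures.
From mathcomp Require Import all_boot all_order all_algebra all_fingroup all_solvable all_field all_character.
Unset Printing Implicit Defensive.
Import GRing.Theory Num.Theory.
Local Open Scope ring_scope.

(* The character group \hat G of a finite abelian group G is represented by
   the index type [Iirr G] of the irreducible characters 'chi[G]_i
   (for abelian G these are exactly the homomorphisms G -> C^x);
   the principal character eps_G is 'chi[G]_0 = 1, with index 0. *)

Definition dual_rel {gT : finGroupType} (G : {group gT}) (P : {set {set gT}})
  (i j : Iirr G) : bool :=
  [forall B in P, (\sum_(g in B) 'chi[G]_i g) == (\sum_(g in B) 'chi[G]_j g)].

Definition dual_partition {gT : finGroupType} (G : {group gT})
  (P : {set {set gT}}) : {set {set Iirr G}} :=
  equivalence_partition (dual_rel G P) [set: Iirr G].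

Definition kraw {gT : finGroupType} (G : {group gT}) (Q : {set Iirr G})
  (B : {set gT}) : algC :=
  \sum_(g in B) 'chi[G]_(odflt 0 [pick i in Q]) g.

(* The bidual partition, pulled back to G along the canonical isomorphism
   G -> \hat{\hat G}, g |-> (chi |-> chi g):
   g ~ g' iff for every block Q of the dual, \sum_{chi in Q} chi g = \sum_{chi in Q} chi g'. *)
Definition bidual_partition {gT : finGroupType} (G : {group gT})
  (P : {set {set gT}}) : {set {set gT}} :=
  equivalence_partition
    (fun g h => [forall Q in dual_partition G P,
        (\sum_(i in Q) 'chi[G]_i g) == (\sum_(i in Q) 'chi[G]_i h)]) G.

Definition reflexive_partition {gT : finGroupType} (G : {group gT})
  (P : {set {set gT}}) : bool :=
  bidual_partition G P == P.

Definition perp {gT : finGroupType} (G H : {group gT}) : {set Iirr G} :=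
  [set i : Iirr G | [forall h in H, 'chi[G]_i h == 1]].

Definition lift_block {gT : finGroupType} (G H : {group gT}) (Q : {set Iirr H})
  : {set Iirr G} :=
  [set i : Iirr G | (i \notin perp G H) &&
     [exists j in Q, 'Res[H] 'chi[G]_i == 'chi[H]_j]].

(* Main.v *)
Require Import Defs.
From HB Require Import structures.
From mathcomp Require Import all_boot all_order all_algebra all_fingroup all_solvable all_field all_character.
From mathcomp Require Import ring zify.
Import GRing.Theory Num.Theory.
Local Open Scope ring_scope.

Section Aux.
Variables (gT : finGroupType) (G H : {group gT}).
Hypotheses (abelG : abelian G) (sHG : H \subset G).

Local Notation r := (Res_Iirr H).

Lemma abH : abelian H.
Proof. exact: abelianS abelG. Qed.

Lemma chiG1 (i : Iirr G) : 'chi[G]_i 1%g = 1.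
Proof. exact: lin_char1 (char_abelianP _ abelG i). Qed.

Lemma resE (i : Iirr G) h : h \in H -> 'chi[H]_(r i) h = 'chi[G]_i h.
Proof. by move=> Hh; rewrite lin_Res_IirrE ?chiG1 // cfResE. Qed.

Lemma resI (i : Iirr G) j : ('Res[H] 'chi[G]_i == 'chi[H]_j) = (r i == j).
Proof. by rewrite -lin_Res_IirrE ?chiG1 // (inj_eq irr_inj). Qed.

Lemma perpE (i : Iirr G) : (i \in perp G H) = (r i == 0).
Proof.
rewrite inE; apply/forall_inP/eqP => [h1 | r0 h Hh].
  apply: irr_inj; rewrite irr0; apply/cfunP => x.
  rewrite cfun1E; case: (boolP (x \in H)) => Hx; last by rewrite cfun0.
  by rewrite resE //; apply/eqP/h1.
by rewrite -resE // r0 irr0 cfun1E Hh.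
Qed.

Lemma sum_irr (K : {group gT}) (i : Iirr K) :
  \sum_(g in K) 'chi[K]_i g = #|K|%:R * (i == 0)%:R.
Proof.
have := cfdot_irr i 0; rewrite cfdotE irr0 => E.
have nz : (#|K|%:R : algC) != 0 by rewrite pnatr_eq0 -lt0n cardG_gt0.
rewrite -E mulrA mulfV // mul1r; apply: eq_bigr => g Kg.
by rewrite cfun1E Kg conjC1 mulr1.
Qed.

Lemma sum_diff (f : gT -> algC) :
  \sum_(g in G :\: H) f g = \sum_(g in G) f g - \sum_(g in H) f g.
Proof.
by rewrite (big_setID (A:=G) H) /= (setIidPr sHG) addrC addrK.
Qed.

Lemma indE j g : g \in G ->
  ('Ind[G] 'chi[H]_j) g = (#|G|%:R / #|H|%:R) * 'chi[H]_j g.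
Proof.
move=> Gg; rewrite cfIndE // (eq_bigr (fun=> 'chi[H]_j g)); last first.
  move=> y Gy; congr ('chi_j _); rewrite conjgE.
  by rewrite (centsP abelG g Gg y Gy) mulKg.
rewrite sumr_const -mulr_natr; ring.
Qed.

Lemma fibre j g : g \in G ->
  \sum_(i | r i == j) 'chi[G]_i g = ('Ind[G] 'chi[H]_j) g.
Proof.
move=> Gg; have -> := cfun_sum_cfdot ('Ind[G] 'chi[H]_j); rewrite sum_cfunE.
rewrite big_mkcond /=; apply: eq_bigr => i _; rewrite cfunE.
rewrite -Frobenius_reciprocity -lin_Res_IirrE ?chiG1 // cfdot_irr eq_sym.
by case: (j == Res_Iirr H i); rewrite ?mul1r ?mul0r.
Qed.


Lemma chiH1 (j : Iirr H) : 'chi[H]_j 1%g = 1.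
Proof. exact: lin_char1 (char_abelianP _ abH j). Qed.

Lemma card_fibre j :
  (#|[set i : Iirr G | r i == j]|)%:R = (#|G|%:R / #|H|%:R : algC).
Proof.
have := fibre j 1%g (group1 G); rewrite indE ?group1 // chiH1 mulr1 => <-.
rewrite (eq_bigr (fun=> 1)) => [|i _]; last exact: chiG1.
by rewrite sumr_const cardsE.
Qed.

Hypothesis pHG : H \proper G.

Lemma nzG : (#|G|%:R : algC) != 0.
Proof. by rewrite pnatr_eq0 -lt0n cardG_gt0. Qed.
Lemma nzH : (#|H|%:R : algC) != 0.
Proof. by rewrite pnatr_eq0 -lt0n cardG_gt0. Qed.
Lemma nGH : (#|G|%:R : algC) != #|H|%:R.
Proof. by rewrite eqr_nat; have := proper_card pHG; case: ltngtP. Qed.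

Lemma perp_nt : exists2 i, i \in perp G H & i != 0.
Proof.
case: (boolP [exists i, (i \in perp G H) && (i != 0)]) => [/existsP[i /andP[]] | /existsPn none]; first by exists i.
exfalso.
have cf := card_fibre 0.
have E : (#|[set i : Iirr G | r i == (0%R : Iirr H)]| * #|H|)%N = #|G|.
  by apply/eqP; rewrite -(eqr_nat algC) natrM cf mulfVK // nzH.
have : [set i : Iirr G | r i == 0] \subset [set (0 : Iirr G)].
  apply/subsetP => i; rewrite !inE -perpE => pi.
  by have := none i; rewrite pi /= negbK.
move/subset_leq_card; rewrite cards1 => le1.
have := proper_card pHG; have := cardG_gt0 H; nia.
Qed.

Definition a i := \sum_(g in G :\: H) 'chi[G]_i g.

Lemma aval i : a i = if i == 0 then #|G|%:R - #|H|%:R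
                     else if r i == 0 then - #|H|%:R else 0.
Proof.
rewrite /a sum_diff sum_irr (eq_bigr (fun g => 'chi[H]_(r i) g)) => [|g Hg]; last by rewrite resE.
rewrite sum_irr; case: eqVneq => [->|i0]; first by rewrite Res_Iirr0 !mulr1.
case: eqVneq => _; rewrite /= ?mulr0n ?mulr1n ?mulr0 ?mulr1 ?sub0r ?subr0. all: by rewrite ?oppr0.
Qed.

Lemma a_kind0 k : (a 0 == a k) = (k == 0).
Proof.
rewrite !aval eqxx; case: (eqVneq k 0) => [_|k0]; first by rewrite eqxx.
case: (eqVneq (r k) 0) => _ /=.
  by rewrite subr_eq addNr (negPf nzG).
by rewrite subr_eq0 (negPf nGH).
Qed.

Lemma a_kindp i k : i != 0 -> r i == 0 -> (a i == a k) = (k != 0) && (r k == 0).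
Proof.
move=> i0 ri0; rewrite !aval (negPf i0) ri0; case: (eqVneq k 0) => [_|k0] /=.
  by rewrite eq_sym subr_eq addNr (negPf nzG).
case: (eqVneq (r k) 0) => _ /=; first by rewrite eqxx.
by rewrite oppr_eq0 (negPf nzH).
Qed.

Lemma a_kindo i k : r i != 0 -> (a i == a k) = (r k != 0).
Proof.
move=> ri0; rewrite !aval (negPf ri0).
have -> : (i == 0) = false by apply: contraNF ri0 => /eqP ->; rewrite Res_Iirr0.
case: (eqVneq k 0) => [e|k0] /=.
  by rewrite e Res_Iirr0 eq_sym subr_eq0 (negPf nGH) eqxx.
case: (eqVneq (r k) 0) => _ /=; last by rewrite eqxx.
by rewrite eq_sym oppr_eq0 (negPf nzH).
Qed.

Lemma drel_trans {K : {group gT}} {Q : {set {set gT}}} {x y z} :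
  dual_rel K Q x y -> dual_rel K Q x z = dual_rel K Q y z.
Proof.
move/forall_inP => h; apply/forall_inP/forall_inP => h2 B QB.
  by rewrite -(eqP (h B QB)); apply: h2.
by rewrite (eqP (h B QB)); apply: h2.
Qed.

Lemma drel_refl (K : {group gT}) (Q : {set {set gT}}) x : dual_rel K Q x x.
Proof. by apply/forall_inP => B _. Qed.

Lemma lift_mem Q k :
  (k \in lift_block G H Q) = (r k != 0) && (r k \in Q).
Proof.
rewrite inE perpE; congr andb; apply/existsP/idP => [[j /andP[Qj]] | Qrk].
  by rewrite resI => /eqP ->.
by exists (r k); rewrite Qrk resI eqxx.
Qed.

Variable P : {set {set gT}}.
Hypothesis partP : partition P H.

Lemma subB B : B \in P -> B \subset H.
Proof.
case/and3P: partP => /eqP cov _ _ PB; rewrite -cov; exact: bigcup_sup.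
Qed.

Lemma sumB i B : B \in P ->
  \sum_(g in B) 'chi[G]_i g = \sum_(g in B) 'chi[H]_(r i) g.
Proof.
move=> PB; apply: eq_bigr => g Bg; rewrite resE //; exact: (subsetP (subB _ PB)).
Qed.

Lemma drelG i k : dual_rel G ((G :\: H) |: P) i k =
  (a i == a k) && dual_rel H P (r i) (r k).
Proof.
apply/forall_inP/andP => [h | [e /forall_inP h] B].
  split; first by apply: h; rewrite setU11.
  apply/forall_inP => B PB; rewrite -!sumB //; apply: h; exact: setU1r.
rewrite in_setU1 => /orP[/eqP -> // | PB]; rewrite !sumB //; exact: h.
Qed.

Lemma cl0 : [set k in [set: Iirr G] | dual_rel G ((G :\: H) |: P) 0 k] = [set 0].
Proof.
apply/setP => k; rewrite !inE drelG a_kind0.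
by case: eqVneq => [->|] //=; rewrite drel_refl.
Qed.

Lemma clp i : i != 0 -> r i == 0 ->
  [set k in [set: Iirr G] | dual_rel G ((G :\: H) |: P) i k] = perp G H :\ (0 : Iirr G).
Proof.
move=> i0 ri0; apply/setP => k; rewrite in_setD1 perpE !inE /= drelG (a_kindp _ _ i0 ri0).
case: (k != 0) => //=; case: (eqVneq (r k) 0) => //= rk0.
by rewrite rk0 (eqP ri0) drel_refl.
Qed.

Lemma clo i : r i != 0 ->
  [set k in [set: Iirr G] | dual_rel G ((G :\: H) |: P) i k] =
  lift_block G H [set y in [set: Iirr H] | dual_rel H P (r i) y].
Proof.
move=> ri0; apply/setP => k; rewrite lift_mem !inE drelG (a_kindo _ _ ri0).
by [].
Qed.

Lemma dualG : dual_partition G ((G :\: H) |: P) =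
  [set Q in perp G H :\ (0 : Iirr G) |: ([set (0 : Iirr G)] |:
     [set lift_block G H Q | Q in dual_partition H P :\ [set (0 : Iirr H)]])
   | Q != set0].
Proof.
rewrite /dual_partition /equivalence_partition; apply/setP => X; rewrite inE.
apply/imsetP/andP => [[i _ ->] | [XS Xn0]].
  case: (eqVneq i 0) => [->|i0].
    rewrite cl0; split; first exact/setU1r/setU11.
    by apply/set0Pn; exists 0; rewrite inE.
  case: (eqVneq (r i) 0) => ri0.
    rewrite clp ?ri0 //; split; first exact: setU11.
    by apply/set0Pn; exists i; rewrite in_setD1 i0 perpE ri0.
  rewrite clo //; split.
    apply/setU1r/setU1r/imsetP; exists [set y in [set: Iirr H] | dual_rel H P (r i) y] => //.
    rewrite in_setD1; apply/andP; split.
      apply/eqP => E; have : r i \in [set y in [set: Iirr H] | dual_rel H P (r i) y].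
        by rewrite !inE drel_refl.
      by rewrite E inE (negPf ri0).
    by apply/imsetP; exists (r i).
  by apply/set0Pn; exists i; rewrite lift_mem ri0 !inE drel_refl.
rewrite !in_setU1 in XS; case/or3P: XS => [/eqP EX | /eqP EX | XS].
- move: Xn0; rewrite EX => /set0Pn[i]; rewrite in_setD1 perpE => /andP[i0 ri0].
  by exists i => //; rewrite clp.
- by exists 0 => //; rewrite cl0 EX.
case/imsetP: XS => Q; rewrite in_setD1 => /andP[Q0 /imsetP[j _ EQ]] EX.
move: Xn0; rewrite EX => /set0Pn[i]; rewrite lift_mem => /andP[ri0 riQ].
exists i => //; rewrite clo //; congr lift_block; rewrite EQ.
move: riQ; rewrite EQ !inE /= => hj.
by apply/setP => y; rewrite !inE (drel_trans hj).
Qed.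

Lemma pick_prop (T : finType) (Q : {set T}) (x0 : T) (p : T -> Prop) :
  Q != set0 -> (forall i, i \in Q -> p i) -> p (odflt x0 [pick i in Q]).
Proof.
move=> /set0Pn[j Qj] h; case: pickP => [i Qi | none]; first exact: h.
by have := none j; rewrite Qj.
Qed.

Lemma pick_in {T : finType} {Q : {set T}} (x0 : T) :
  Q != set0 -> exists2 i, i \in Q & odflt x0 [pick i in Q] = i.
Proof.
move=> /set0Pn[j Qj]; case: pickP => [i Qi | none]; first by exists i.
by have := none j; rewrite Qj.
Qed.

Lemma sum1 (K : {group gT}) (B : {set gT}) :
  B \subset K -> \sum_(g in B) (1 : 'CF(K)) g = #|B|%:R.
Proof.
move=> sBK; rewrite (eq_bigr (fun=> 1)) ?sumr_const // => g Bg.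
by rewrite cfun1E (subsetP sBK).
Qed.

Lemma Qm1_n0 : perp G H :\ (0 : Iirr G) != set0.
Proof. by case: perp_nt => i pi i0; apply/set0Pn; exists i; rewrite in_setD1 i0. Qed.

Lemma part2 : kraw G (perp G H :\ (0 : Iirr G)) (G :\: H) = - (#|H|%:R) /\
      (forall B, B \in P -> kraw G (perp G H :\ (0 : Iirr G)) B = #|B|%:R).
Proof.
split.
  rewrite /kraw; have [i + ->] := pick_in 0 Qm1_n0; rewrite in_setD1 perpE => /andP[i0 ri0].
  by have := aval i; rewrite /a (negPf i0) ri0.
move=> B PB; rewrite /kraw; have [i + ->] := pick_in 0 Qm1_n0.
rewrite in_setD1 perpE => /andP[i0 /eqP ri0].
by rewrite sumB // ri0 irr0 sum1 // subB.
Qed.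

Lemma pick0E (K : {group gT}) :
  odflt 0 [pick i in [set (0 : Iirr K)]] = 0.
Proof.
have [|i + ->] := @pick_in _ [set (0 : Iirr K)] 0; first by apply/set0Pn; exists 0; rewrite inE.
by rewrite inE => /eqP ->.
Qed.

Lemma part3 : kraw G [set (0 : Iirr G)] (G :\: H) = #|G :\: H|%:R /\
      (forall B, B \in P -> kraw G [set (0 : Iirr G)] B = kraw H [set (0 : Iirr H)] B).
Proof.
split.
  by rewrite /kraw pick0E irr0 sum1 // subsetDl.
move=> B PB; rewrite /kraw !pick0E.
by rewrite !irr0 !sum1 ?subB // (subset_trans (subB _ PB)).
Qed.

Lemma part4 Q : Q \in dual_partition H P -> Q != [set (0 : Iirr H)] ->
         lift_block G H Q != set0 ->
         kraw G (lift_block G H Q) (G :\: H) = 0 /\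
         (forall B, B \in P -> kraw G (lift_block G H Q) B = kraw H Q B).
Proof.
move=> /imsetP[x _ EQ] _ Ln0; split.
  rewrite /kraw; have [i + ->] := pick_in 0 Ln0; rewrite lift_mem => /andP[ri0 _].
  have i0 : i != 0 by apply: contraNneq ri0 => ->; rewrite Res_Iirr0.
  by have := aval i; rewrite /a (negPf i0) (negPf ri0).
move=> B PB; rewrite /kraw; have [i + ->] := pick_in 0 Ln0; rewrite lift_mem => /andP[_ riQ].
have Qn0 : Q != set0 by apply/set0Pn; exists (r i).
have [j jQ ->] := pick_in 0 Qn0; rewrite sumB //.
move: riQ jQ; rewrite EQ !inE /= => hi hj.
by move: hj; rewrite (drel_trans hi) => /forall_inP/(_ B PB)/eqP.
Qed.

Definition cGH : algC := #|G|%:R / #|H|%:R.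

Lemma cGH_neq0 : cGH != 0.
Proof. by rewrite /cGH mulf_neq0 ?invr_eq0 ?nzG ?nzH. Qed.

Lemma sQm1 g : g \in G ->
  \sum_(i in perp G H :\ (0 : Iirr G)) 'chi[G]_i g = cGH * (g \in H)%:R - 1.
Proof.
move=> Gg; have p0 : (0 : Iirr G) \in perp G H by rewrite perpE Res_Iirr0.
have E : \sum_(i in perp G H) 'chi[G]_i g = 'chi[G]_0 g + \sum_(i in perp G H :\ (0 : Iirr G)) 'chi[G]_i g.
  by rewrite (big_setD1 0 p0).
apply: (addrI ('chi[G]_0 g)); rewrite -E irr0 cfun1E Gg addrC subrK.
rewrite (eq_bigl (fun i => r i == 0)) => [|i]; last by rewrite perpE.
by rewrite fibre // indE // irr0 cfun1E.
Qed.

Lemma slift Q g : g \in G ->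
  \sum_(i in lift_block G H Q) 'chi[G]_i g =
  cGH * \sum_(j in Q | j != 0) 'chi[H]_j g.
Proof.
move=> Gg; rewrite (eq_bigl (fun i => (r i != 0) && (r i \in Q))) => [|i]; last by rewrite lift_mem.
rewrite (partition_big r (fun j => (j \in Q) && (j != 0))) => [|i /andP[a b]]; last by rewrite b a.
rewrite mulr_sumr; apply: eq_bigr => j /andP[jQ j0]; rewrite -indE // -fibre //.
apply: eq_bigl => i; case: (eqVneq (r i) j) => [->|]; by rewrite ?andbF ?andbT ?jQ ?j0.
Qed.

Lemma sres (Q : {set Iirr H}) g : g \in H ->
  \sum_(j in Q) 'chi[H]_j g = \sum_(j in Q | j != 0) 'chi[H]_j g + (0 \in Q)%:R.
Proof.
move=> Hg; case: (boolP (0 \in Q)) => Q0.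
  by rewrite (bigD1 0) //= irr0 cfun1E Hg addrC.
rewrite addr0; apply: eq_bigl => j; case: (boolP (j \in Q)) => //= jQ.
by apply/esym; apply: contraNneq Q0 => <-.
Qed.

Lemma RbE g h : g \in G -> h \in G ->
  [forall Q in [set Q in perp G H :\ (0 : Iirr G) |: ([set (0 : Iirr G)] |:
     [set lift_block G H Q | Q in dual_partition H P :\ [set (0 : Iirr H)]])
   | Q != set0], (\sum_(i in Q) 'chi[G]_i g) == (\sum_(i in Q) 'chi[G]_i h)] =
  ((cGH * (g \in H)%:R - 1 == cGH * (h \in H)%:R - 1) &&
   [forall Q in dual_partition H P :\ [set (0 : Iirr H)],
     cGH * \sum_(j in Q | j != 0) 'chi[H]_j g == cGH * \sum_(j in Q | j != 0) 'chi[H]_j h]).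
Proof.
move=> Gg Gh; rewrite -sQm1 // -sQm1 //.
apply/forall_inP/andP => [hh | [h1 /forall_inP h2] X].
  split; first by apply: hh; rewrite inE setU11 Qm1_n0.
  apply/forall_inP => Q HQ; rewrite -!slift //.
  case: (eqVneq (lift_block G H Q) set0) => [->|Ln0]; first by rewrite !big_set0.
  apply: hh; rewrite inE Ln0 andbT; apply/setU1r/setU1r/imsetP; exists Q => //.
rewrite inE => /andP[XS _]; rewrite !in_setU1 in XS.
case/or3P: XS => [/eqP-> // | /eqP-> | /imsetP[Q HQ ->]].
  by rewrite !big_set1 irr0 !cfun1E Gg Gh.
by rewrite !slift //; apply: h2.
Qed.

Definition RbG g h := [forall Q in dual_partition G ((G :\: H) |: P),
        (\sum_(i in Q) 'chi[G]_i g) == (\sum_(i in Q) 'chi[G]_i h)].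
Definition RbH g h := [forall Q in dual_partition H P,
        (\sum_(i in Q) 'chi[H]_i g) == (\sum_(i in Q) 'chi[H]_i h)].

Lemma RbGE g h : g \in G -> h \in G -> RbG g h =
  ((cGH * (g \in H)%:R - 1 == cGH * (h \in H)%:R - 1) &&
   [forall Q in dual_partition H P :\ [set (0 : Iirr H)],
     cGH * \sum_(j in Q | j != 0) 'chi[H]_j g == cGH * \sum_(j in Q | j != 0) 'chi[H]_j h]).
Proof. by move=> Gg Gh; rewrite /RbG dualG RbE. Qed.

Lemma neq_c : (cGH * 0%:R - 1 == cGH * 1%:R - 1) = false.
Proof. by rewrite (inj_eq (addIr _)) mulr0 mulr1 eq_sym (negPf cGH_neq0). Qed.

Lemma clL5 g : g \in G -> g \notin H -> [set y in G | RbG g y] = G :\: H.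
Proof.
move=> Gg gH; apply/setP => y; rewrite inE in_setD.
case: (boolP (y \in G)) => Gy /=; rewrite ?andbF //=.
rewrite RbGE // (negPf gH); case: (boolP (y \in H)) => yH /=.
  by rewrite neq_c.
rewrite eqxx /=; apply/forall_inP => Q _.
by rewrite !big1 // => j _; rewrite cfun0.
Qed.

Lemma clL6 g : g \in H -> [set y in G | RbG g y] = [set y in H | RbH g y].
Proof.
move=> gH; have Gg := subsetP sHG g gH; apply/setP => y; rewrite !inE.
case: (boolP (y \in H)) => yH /=; last first.
  case: (boolP (y \in G)) => Gy //=; rewrite RbGE // gH (negPf yH).
  by rewrite eq_sym neq_c.
rewrite (subsetP sHG y yH) RbGE ?(subsetP sHG y yH) // gH yH eqxx /=.
apply/forall_inP/forall_inP => hh Q HQ.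
  case: (eqVneq Q [set 0]) => [->|Q0].
    by rewrite !big_set1 irr0 !cfun1E gH yH.
  have := hh Q; rewrite in_setD1 Q0 HQ => /(_ isT).
  by rewrite (inj_eq (mulfI cGH_neq0)) (sres _ _ gH) (sres _ _ yH) => /eqP ->.
move: HQ; rewrite in_setD1 => /andP[_ HQ].
have := hh Q HQ; rewrite (sres _ _ gH) (sres _ _ yH) (inj_eq (addIr _)) => /eqP ->.
by [].
Qed.

Lemma part5 : reflexive_partition H P -> reflexive_partition G ((G :\: H) |: P).
Proof.
rewrite /reflexive_partition => /eqP bH; apply/eqP.
have eG : bidual_partition G ((G :\: H) |: P) = [set [set y in G | RbG x y] | x in G] by [].
have eH : bidual_partition H P = [set [set y in H | RbH x y] | x in H] by [].
rewrite eG; rewrite eH in bH.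
apply/setP => X; apply/imsetP/idP => [[g Gg ->] | ].
  case: (boolP (g \in H)) => gH.
    have : [set y in H | RbH g y] \in P by rewrite -bH; apply/imsetP; exists g.
    by rewrite clL6 // => XP; rewrite setU1r.
  by rewrite clL5 // setU11.
rewrite in_setU1 => /orP[/eqP -> | XP].
  by case/properP: pHG => _ [g Gg gH]; exists g => //; rewrite clL5.
move: XP; rewrite -bH => /imsetP[g gH ->]; exists g; first exact: (subsetP sHG).
by rewrite clL6.
Qed.

End Aux.

Theorem proposition2p12 (gT : finGroupType) (G H : {group gT})
  (P : {set {set gT}})
  (abelG : abelian G) (properHG : H \proper G) (partP : partition P H) :
  let P' := (G :\: H) |: P in
  let Qm1 := perp G H :\ (0 : Iirr G) in
  [/\ dual_partition G P' =
        [set Q in Qm1 |: ([set (0 : Iirr G)] |: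
           [set lift_block G H Q | Q in dual_partition H P :\ [set (0 : Iirr H)]])
          | Q != set0],
      (* l = -1 *)
      kraw G Qm1 (G :\: H) = - (#|H|%:R) /\
      (forall B, B \in P -> kraw G Qm1 B = #|B|%:R),
      (* l = 0 *)
      kraw G [set (0 : Iirr G)] (G :\: H) = #|G :\: H|%:R /\
      (forall B, B \in P -> kraw G [set (0 : Iirr G)] B = kraw H [set (0 : Iirr H)] B),
      (* l >= 1 *)
      (forall Q, Q \in dual_partition H P -> Q != [set (0 : Iirr H)] ->
         lift_block G H Q != set0 ->
         kraw G (lift_block G H Q) (G :\: H) = 0 /\
         (forall B, B \in P -> kraw G (lift_block G H Q) B = kraw H Q B))
    & (reflexive_partition H P -> reflexive_partition G P')].
Proof.
have sHG := proper_sub properHG.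
move=> P' Qm1; split.
- exact: dualG.
- exact: part2.
- exact: part3.
- exact: part4.
- exact: part5.
Qed.
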